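(* Let $G=(V,E)$ be a graph with no $K_4$ minor and let $C\subseteq V$ be central. Then every simple cycle of $G$ contains at most two edges of $\delta_G(C)$.
   Context: $\delta_G(C)$ is the set of edges of $G$ with exactly one endpoint in $C$. A set $C\subseteq V$ (and the cut $\delta_G(C)$) is central if both $C$ and $V\setminus C$ induce connected subgraphs of $G$. *)

(* Defs.v *)
From mathcomp Require Import all_boot.
Set Implicit Arguments. Unset Strict Implicit. Unset Printing Implicit Defensive.

Definition simple_graph (T : finType) (e : rel T) : Prop :=
  symmetric e /\ irreflexive e.

Definition induced_connected (T : finType) (e : rel T) (S : {set T}) : bool :=
  [forall x in S, forall y in S,
     connect [rel u v | [&& e u v, u \in S & v \in S]] x y].

Definition central (T : finType) (e : rel T) (C : {set T}) : bool :=
  induced_connected e C && induced_connected e (~: C).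

Definition has_K4_minor (T : finType) (e : rel T) : Prop :=
  exists B : 'I_4 -> {set T},
    (forall i, B i != set0) /\
    (forall i, induced_connected e (B i)) /\
    (forall i j, i != j -> [disjoint B i & B j]) /\
    (forall i j, i != j -> exists x, exists y, [/\ x \in B i, y \in B j & e x y]).

Definition simple_cycle (T : finType) (e : rel T) (s : seq T) : bool :=
  [&& cycle e s, uniq s & 2 < size s].

Definition cycle_cut_edges (T : finType) (s : seq T) (C : {set T}) : nat :=
  count (fun x => (x \in C) != (next s x \in C)) s.

(* Main.v *)
Require Import Defs.
From mathcomp Require Import all_boot.
Set Implicit Arguments. Unset Strict Implicit. Unset Printing Implicit Defensive.

Section Gen.
Variables (T : finType) (e : rel T).
Hypothesis esym : symmetric e.

Definition res (S : {set T}) : rel T := [rel u v | [&& e u v, u \in S & v \in S]].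
Definition cmp (S : {set T}) r := [set v | connect (res S) r v].

Lemma res_sym S : symmetric (res S).
Proof. by move=> u v; rewrite /res /= esym andbC [in RHS]andbC; congr andb; rewrite andbC. Qed.

Lemma connect_in (S : {set T}) x y : connect (res S) x y -> x \in S -> y \in S.
Proof.
move/connectP=> [p pth ->]; elim: p x pth => //= z p IH x /andP[/and3P[_ _ zS] pth] _.
exact: IH.
Qed.

Lemma cmp_sub (S : {set T}) r : r \in S -> cmp S r \subset S.
Proof. by move=> rS; apply/subsetP=> v; rewrite inE => /connect_in; apply. Qed.

Lemma cmp_root (S : {set T}) r : r \in cmp S r.
Proof. by rewrite inE connect0. Qed.

Lemma cmp_conn (S : {set T}) r : induced_connected e (cmp S r).
Proof.
have tr: forall x y, connect (res S) x y -> x \in cmp S r -> connect (res (cmp S r)) x y.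
  move=> x y /connectP[p pth ->]; elim: p x pth => [|z p IH] x /=; first by rewrite connect0.
  case/andP=> rxz pth xc.
  have zc : z \in cmp S r.
    by move: xc; rewrite !inE => /connect_trans; apply; apply: connect1.
  apply: (connect_trans (y := z)); last exact: IH.
  by apply: connect1; rewrite /res /= zc xc; case/and3P: rxz => ->.
apply/forallP=> x; apply/implyP=> xc; apply/forallP=> y; apply/implyP=> yc.
apply: tr => //.
have cs := sym_connect_sym (res_sym S).
move: xc yc; rewrite !inE => rx ry.
by apply: connect_trans ry; rewrite cs.
Qed.

Lemma path_res (S : {set T}) x p : path e x p -> all [in S] (x :: p) -> path (res S) x p.
Proof.
elim: p x => //= z p IH x /andP[exz pth] /and3P[xS zS al].
by rewrite /res /= exz xS zS IH //= zS.
Qed.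

Lemma arc_comp (S : {set T}) x p : path e x p -> all [in S] (x :: p) -> {subset x :: p <= cmp S x}.
Proof.
move=> pth al y yin; rewrite inE.
exact: (path_connect (path_res pth al)).
Qed.

Lemma connect_subrel (r r' : rel T) x y : subrel r r' -> connect r x y -> connect r' x y.
Proof.
move=> sub /connectP[p pth ->]; apply/connectP; exists p => //.
exact: sub_path pth.
Qed.

Lemma exit (r : rel T) (A : {set T}) x y : connect r x y -> x \in A -> y \notin A ->
  exists u v, [/\ connect [rel a b | [&& r a b, a \in A & b \in A]] x u, u \in A, v \notin A & r u v].
Proof.
move/connectP=> [p pth ->]; elim: p x pth => [|z p IH] x /=.
  by move=> _ ->.
case/andP=> rxz pth xA nA.
case zA: (z \in A).
  have [u [v [c uA vA ruv]]] := IH z pth zA nA.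
  exists u, v; split => //; apply: connect_trans c; apply: connect1.
  by rewrite /= rxz xA zA.
by exists x, z; rewrite connect0 zA.
Qed.

End Gen.

Fixpoint lch (a : bool) (l : seq bool) : nat :=
  if l is b :: l' then (a != b) + lch b l' else 0.

Lemma lch_cat a l1 l2 : lch a (l1 ++ l2) = lch a l1 + lch (last a l1) l2.
Proof. by elim: l1 a => //= b l IH a; rewrite IH addnA. Qed.

Lemma lch_const a l : all (pred1 a) l -> lch a l = 0.
Proof. by elim: l => //= b l IH /andP[/eqP -> /IH ->]; rewrite eqxx. Qed.

Lemma lch_true_false l : all (pred1 false) l -> l != [::] -> lch true l = 1.
Proof. by case: l => //= b l /andP[/eqP -> al] _; rewrite lch_const. Qed.

Section S.
Variables (T : finType).

Lemma count_next_at (f : T -> bool) y0 z p : uniq (z :: p) ->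
  count (fun x => f x != f (next_at x y0 z p)) (z :: p) = lch (f z) (rcons (map f p) (f y0)).
Proof.
elim: p z => [|z' p IH] z /=; first by rewrite eqxx addn0.
case/andP=> zn un; rewrite eqxx -IH //=.
have nz: forall x, x \in z' :: p -> (x == z) = false.
  by move=> x xin; apply/eqP => E; rewrite -E xin in zn.
rewrite (nz z') ?mem_head //; congr (_ + (_ + _)); apply: eq_in_count => x xin /=.
by rewrite nz // inE xin orbT.
Qed.

Lemma cut_lch (C : {set T}) y p : uniq (y :: p) ->
  cycle_cut_edges (y :: p) C = lch (y \in C) (rcons (map (fun x => x \in C) p) (y \in C)).
Proof. by move=> u; rewrite /cycle_cut_edges /= -(count_next_at (fun x => x \in C)). Qed.

Lemma split_first (a : pred T) p : has a p ->
  exists N x r, [/\ p = N ++ x :: r, all (predC a) N & a x].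
Proof.
elim: p => //= z p IH; case az: (a z) => /=.
  by move=> _; exists [::], z, p.
case/IH=> N [x [r [-> aN ax]]]; exists (z :: N), x, r; by rewrite /= az.
Qed.

Lemma split_prefix (a : pred T) r :
  exists X R, [/\ r = X ++ R, all a X & (if R is w :: _ then ~~ a w else true)].
Proof.
elim: r => [|z r [X [R [-> aX h]]]]; first by exists [::], [::].
case az: (a z).
  by exists (z :: X), R; split => //=; rewrite az.
by exists [::], (z :: X ++ R); rewrite /= az.
Qed.

Lemma cut0 (C : {set T}) s : (all [in C] s || all [predC C] s) -> cycle_cut_edges s C = 0.
Proof.
move=> h; rewrite /cycle_cut_edges -(count_pred0 s); apply: eq_in_count => x xs /=.
have nxs : next s x \in s by rewrite mem_next.
case/orP: h => /allP h.
  by have := h x xs; have := h _ nxs; rewrite /= => -> ->.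
by have := h x xs; have := h _ nxs; rewrite /= => /negbTE -> /negbTE ->.
Qed.

Lemma cut_rot (C : {set T}) n s : uniq s -> cycle_cut_edges (rot n s) C = cycle_cut_edges s C.
Proof.
move=> u; rewrite /cycle_cut_edges.
rewrite (eq_count (a2 := fun x => (x \in C) != (next s x \in C))); last by move=> x /=; rewrite next_rot.
by apply/permP; rewrite perm_rot.
Qed.

End S.

Section Main.
Variables (T : finType) (e : rel T) (C : {set T}).
Hypothesis esym : symmetric e.
Hypothesis hC : induced_connected e C.
Hypothesis hNC : induced_connected e (~: C).

Lemma disj_of (A B : {set T}) : (forall v, v \in A -> v \in B -> False) -> [disjoint A & B].
Proof.
move=> h; rewrite disjoint_subset; apply/subsetP => v vA; rewrite inE; apply/negP => vB.
exact: h v vA vB.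
Qed.

Lemma ic_connect (S : {set T}) x y : induced_connected e S -> x \in S -> y \in S ->
  connect (res e S) x y.
Proof. by move=> /forallP/(_ x)/implyP h /h/forallP/(_ y)/implyP. Qed.

Lemma main (x0 : T) (X' L : seq T) :
  cycle e (x0 :: X' ++ L) -> uniq (x0 :: X' ++ L) -> all [in C] (x0 :: X') ->
  head x0 L \notin C -> last x0 L \notin C -> has [in C] L -> has_K4_minor e.
Proof.
move=> cyc un aX hL lL /hasP[c cL cC].
have XL : forall v, v \in x0 :: X' -> v \notin L.
  move: un; rewrite -cat_cons cat_uniq => /and3P[_ /hasPn h _] v vX.
  by apply/negP => /h; rewrite vX.
pose S1 := [set v | (v \in C) && (v \notin L)].
have S1E : forall v, (v \in S1) = (v \in C) && (v \notin L) by move=> v; rewrite inE.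
clearbody S1.
have x0S1 : x0 \in S1 by rewrite S1E (allP aX) ?mem_head // XL ?mem_head.
have cS1 : c \notin S1 by rewrite S1E cL andbF.
have [u [b [cu uS1 bS1 rub]]] := exit (ic_connect hC (allP aX _ (mem_head _ _)) cC) x0S1 cS1.
case/and3P: rub => eub _ bC.
have bL : b \in L by move: bS1; rewrite S1E bC /= negbK.
have uB1 : u \in cmp e S1 x0.
  rewrite inE; apply: connect_subrel cu => a a' /and3P[/and3P[? _ _] ? ?].
  by rewrite /res /= ; apply/and3P.
have [P [Q eL]] : exists P Q, L = P ++ b :: Q by case/splitPr: bL => P Q; exists P, Q.
subst L.
have [p0 [P' eP]] : exists p0 P', P = p0 :: P'.
  by case: (P) hL => [|p0 P'] /=; [rewrite bC | exists p0, P'].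
have [q0 [Q' eQ]] : exists q0 Q', Q = q0 :: Q'.
  by case: (Q) lL => [|q0 Q'] /=; [rewrite last_cat /= bC | exists q0, Q'].
subst P Q.
move: cyc; rewrite /= rcons_cat cat_path /= rcons_cat cat_path /= rcons_path.
move=> /and5P[pX eXp pP ePb /andP[ebq /andP[pQ eQx]]].
have uL : uniq ((p0 :: P') ++ [:: b, q0 & Q']).
  by move: un; rewrite -cat_cons cat_uniq => /and3P[_ _ ->].
move: uL; rewrite cat_uniq => /and3P[_ /hasPn nPBQ /andP[bQ _]].
have p0C : p0 \notin C by [].
have qlC : last q0 Q' \notin C by rewrite last_cat in lL.
set s := x0 :: X' ++ (p0 :: P') ++ [:: b, q0 & Q'] in un XL *.
pose S2 := [set v | (v \in p0 :: P') || ((v \notin C) && (v \notin s))].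
pose S3 := [set b].
pose S4 := [set v in q0 :: Q'].
have p0S2 : p0 \in S2 by rewrite inE mem_head.
have qlQ : last q0 Q' \in q0 :: Q' by apply: mem_last.
have qls : forall v, v \in q0 :: Q' -> v \in s.
  by move=> v vQ; rewrite /s -cat_cons !mem_cat !inE; move: vQ; rewrite inE => ->; rewrite !orbT.
have qlS2 : last q0 Q' \notin S2.
  rewrite inE negb_or qls // andbF andbT; apply: nPBQ; by rewrite inE qlQ orbT.
have p0NC : p0 \in ~: C by rewrite inE.
have qlNC : last q0 Q' \in ~: C by rewrite inE.
have [u2 [v2 [cu2 u2S2 v2S2 /and3P[ev2 _ v2NC]]]] :=
  exit (ic_connect hNC p0NC qlNC) p0S2 qlS2.
have v2Q : v2 \in q0 :: Q'.
  move: v2S2 v2NC; rewrite !in_set negb_or => /andP[v2P]; rewrite negb_and !negbK => h v2C.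
  have v2s : v2 \in s by move: h; rewrite (negbTE v2C).
  move: v2s; rewrite /s -cat_cons !mem_cat => /orP[v2X | /orP[v2P' | v2R]].
  - by move: (allP aX v2 v2X); rewrite (negbTE v2C).
  - by rewrite v2P' in v2P.
  move: v2R; rewrite in_cons => /orP[/eqP v2b|//].
  by move: bC; rewrite -v2b (negbTE v2C).
have u2B2 : u2 \in cmp e S2 p0.
  rewrite inE; apply: connect_subrel cu2 => a a' /and3P[/and3P[? _ _] ? ?].
  by rewrite /res /= ; apply/and3P.
have aS1 : all [in S1] (x0 :: X').
  by apply/allP => v vX; rewrite /= S1E (allP aX _ vX) XL.
have xlB1 : last x0 X' \in cmp e S1 x0 by apply: (arc_comp pX aS1); apply: mem_last.
have aS2 : all [in S2] (p0 :: P') by apply/allP => v vP; rewrite /= inE vP.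
have plB2 : last p0 P' \in cmp e S2 p0 by apply: (arc_comp pP aS2); apply: mem_last.
have aS4 : all [in S4] (q0 :: Q') by apply/allP => v vQ; rewrite /= inE vQ.
have QB4 : {subset q0 :: Q' <= cmp e S4 q0} by apply: (arc_comp pQ aS4).
have D12 : [disjoint S1 & S2].
  apply: disj_of => v; rewrite S1E in_set => /andP[vC vL] /orP[vP|/andP[vNC _]].
  - by move: vL; rewrite mem_cat vP.
  - by rewrite vC in vNC.
have D13 : [disjoint S1 & S3].
  by apply: disj_of => v; rewrite S1E in_set1 => /andP[_ vL] /eqP vb; move: vL; rewrite vb bL.
have D14 : [disjoint S1 & S4].
  apply: disj_of => v; rewrite S1E in_set => /andP[_ vL] vQ.
  by move: vL; rewrite mem_cat negb_or => /andP[_]; rewrite in_cons vQ orbT.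
have D23 : [disjoint S2 & S3].
  apply: disj_of => v; rewrite in_set in_set1 => /orP[vP|/andP[vNC _]] /eqP vb.
  - by move: (nPBQ b (mem_head _ _)); rewrite -vb vP.
  - by move: bC; rewrite -vb (negbTE vNC).
have D24 : [disjoint S2 & S4].
  apply: disj_of => v; rewrite !in_set => /orP[vP|/andP[_ vs]] vQ.
  - by move: (nPBQ v); rewrite in_cons vQ orbT vP => /(_ isT).
  - by rewrite qls in vs.
have D34 : [disjoint S3 & S4].
  by apply: disj_of => v; rewrite in_set1 in_set => /eqP -> bQ'; rewrite bQ' in bQ.
have DB : forall (A B : {set T}) rA rB, rA \in A -> rB \in B -> [disjoint A & B] ->
    [disjoint cmp e A rA & cmp e B rB].
  by move=> A B rA rB hA hB D; apply: disjointW D; apply: cmp_sub.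
have bS3 : b \in S3 by rewrite in_set1.
have q0S4 : q0 \in S4 by rewrite in_set mem_head.
pose B1 := cmp e S1 x0; pose B2 := cmp e S2 p0; pose B3 := cmp e S3 b; pose B4 := cmp e S4 q0.
have E12 := DB _ _ _ _ x0S1 p0S2 D12.
have E13 := DB _ _ _ _ x0S1 bS3 D13.
have E14 := DB _ _ _ _ x0S1 q0S4 D14.
have E23 := DB _ _ _ _ p0S2 bS3 D23.
have E24 := DB _ _ _ _ p0S2 q0S4 D24.
have E34 := DB _ _ _ _ bS3 q0S4 D34.
have adjS : forall (A B : {set T}), (exists x y, [/\ x \in A, y \in B & e x y]) ->
    exists x y, [/\ x \in B, y \in A & e x y].
  by move=> A B [x [y [xA yB exy]]]; exists y, x; rewrite esym.
have A12 : exists x y, [/\ x \in B1, y \in B2 & e x y].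
  by exists (last x0 X'), p0; split => //; apply: cmp_root.
have A13 : exists x y, [/\ x \in B1, y \in B3 & e x y].
  by exists u, b; split => //; apply: cmp_root.
have A14 : exists x y, [/\ x \in B1, y \in B4 & e x y].
  by exists x0, (last q0 Q'); split; [apply: cmp_root | apply: QB4 | rewrite esym].
have A23 : exists x y, [/\ x \in B2, y \in B3 & e x y].
  by exists (last p0 P'), b; split => //; apply: cmp_root.
have A24 : exists x y, [/\ x \in B2, y \in B4 & e x y].
  by exists u2, v2; split => //; apply: QB4.
have A34 : exists x y, [/\ x \in B3, y \in B4 & e x y].
  by exists b, q0; split => //; [apply: cmp_root | apply: QB4; apply: mem_head].
exists (fun i : 'I_4 => match val i with 0 => B1 | 1 => B2 | 2 => B3 | _ => B4 end).
split; [|split; [|split]].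
- by case=> [[|[|[|[|i]]]] Hi] //=; apply/set0Pn; eexists; apply: cmp_root.
- by case=> [[|[|[|[|i]]]] Hi] //=; apply: cmp_conn.
- move=> [[|[|[|[|i]]]] Hi] // [[|[|[|[|j]]]] Hj] //= _.
  all: try (rewrite disjoint_sym; first [exact: E12 | exact: E13 | exact: E14 | exact: E23 | exact: E24 | exact: E34]).
  move=> [[|[|[|[|i]]]] Hi] // [[|[|[|[|j]]]] Hj] //= _.
  all: try (apply: adjS; first [exact: A12 | exact: A13 | exact: A14 | exact: A23 | exact: A24 | exact: A34]).
  all: first [exact: A12 | exact: A13 | exact: A14 | exact: A23 | exact: A24 | exact: A34].
Qed.
End Main.
Unset Implicit Arguments. Set Strict Implicit. Set Printing Implicit Defensive.

Lemma last_const (a : bool) l : all (pred1 a) l -> last a l = a.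
Proof. by elim: l a => //= b l IH a /andP[/eqP -> /IH]. Qed.

Theorem lemma2p2 (T : finType) (e : rel T) (C : {set T}) (s : seq T) :
  simple_graph e -> ~ has_K4_minor e -> central e C -> simple_cycle e s ->
  cycle_cut_edges s C <= 2.
Proof.
move=> [esym _] noK4 /andP[hC hNC] /and3P[cyc un sz].
rewrite leqNgt; apply/negP => H3; apply: noK4.
have [/hasP[u us uNC] | /hasPn h] := boolP (has [predC C] s); last first.
  move: H3; rewrite cut0 //.
  by apply/orP; left; apply/allP => x /h /=; rewrite negbK.
case: (rot_to us) => i p rs.
have cyc1 : cycle e (u :: p) by rewrite -rs rot_cycle.
have un1 : uniq (u :: p) by rewrite -rs rot_uniq.
have H3' : 2 < cycle_cut_edges (u :: p) C by rewrite -rs cut_rot.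
have [hp | /hasPn h] := boolP (has [in C] p); last first.
  move: H3'; rewrite cut0 //.
  apply/orP; right; apply/allP => x; rewrite inE => /orP[/eqP -> //|/h] /=.
  by [].
move: hp; case/split_first => N [x0 [r [ep aN x0C]]].
have [Xr [R [er aX hR]]] := split_prefix [in C] r.
subst p r.
case hasR: (has [in C] R).
  have E : x0 :: Xr ++ R ++ u :: N = rot (size (u :: N)) ((u :: N) ++ (x0 :: Xr ++ R)).
    by rewrite rot_size_cat /= -catA.
  apply: (main esym hC hNC (x0 := x0) (X' := Xr) (L := R ++ u :: N)).
  - by rewrite E rot_cycle.
  - by rewrite E rot_uniq.
  - by rewrite /= x0C.
  - by case: (R) hR hasR.
  - rewrite last_cat /=.
    have : last u N \in u :: N by apply: mem_last.
    rewrite inE => /orP[/eqP -> //|/(allP aN)] /=.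
    by [].
  - by rewrite has_cat hasR.
exfalso; move: H3'.
rewrite cut_lch // (negbTE uNC) map_cat /= map_cat rcons_cat /= rcons_cat.
have aN' : all (pred1 false) (map (fun x => x \in C) N).
  by rewrite all_map; apply: sub_all aN => x /= /negbTE ->.
have aR' : all (pred1 false) (map (fun x => x \in C) R).
  by rewrite all_map; apply/allP => x xR /=; apply/eqP/negbTE; apply/negP => xC; move/negP: hasR; apply; apply/hasP; exists x.
have aX' : all (pred1 true) (map (fun x => x \in C) Xr).
  by rewrite all_map; apply: sub_all aX => x /= ->.
rewrite lch_cat lch_const // last_const //= x0C /= lch_cat lch_const // last_const //.
by rewrite lch_true_false // ?all_rcons ?aR' //; case: (map _ R).
Qed.
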